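(* Let $(V,L,\varphi,E)$ be a valuation system. Suppose there exist a sublattice $C$ of $V$ and a valuation $\psi:C\to E$ such that $\psi$ extends $\varphi$ and $(V,C,\psi,E)$ is complete. Then there is a sublattice $\overline L$ of $V$ and a valuation $\overline\varphi:\overline L\to E$ such that $\overline\varphi$ extends $\varphi$, $(V,\overline L,\overline\varphi,E)$ is complete, and $\psi'$ extends $\overline\varphi$ for every sublattice $C'$ of $V$ and every valuation $\psi':C'\to E$ that extends $\varphi$ and for which $(V,C',\psi',E)$ is complete. Moreover, $\varphi$ is $\Pi_\xi$-extendible and $\overline\varphi=\Pi_\xi\varphi$ for some ordinal number $\xi$.
   Context: A valuation system $(V,L,\varphi,E)$ consists of: (i) a lattice $V$ which is $\sigma$-distributive, i.e. for every $a\in V$ and every sequence $(b_n)$ in $V$ whose infimum exists, $\bigwedge_n(a\vee b_n)$ exists and equals $a\vee\bigwedge_n b_n$, and dually whenever $\bigvee_n b_n$ exists, $\bigvee_n(a\wedge b_n)$ exists and equals $a\wedge\bigvee_n b_n$; (ii) a sublattice $L$ of $V$; (iii) a partially ordered abelian group $E$ which is R-complete: whenever $x_1\ge x_2\ge\cdots$ and $y_1\ge y_2\ge\cdots$ in $E$ are such that $\bigwedge_n(x_n+y_n)$ exists, then $\bigwedge_n x_n$ and $\bigwedge_n y_n$ exist, and dually for increasing sequences and suprema; (iv) a valuation $\varphi:L\to E$, i.e. an order-preserving map with $\varphi(a\wedge b)+\varphi(a\vee b)=\varphi(a)+\varphi(b)$. A map $\psi:C\to E$ extends $\varphi:L\to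 E$ if $L\subseteq C$ and $\psi|_L=\varphi$. A decreasing sequence $(a_n)$ in $L$ is $\varphi$-convergent if $\bigwedge_n a_n$ exists in $V$ and $\bigwedge_n\varphi(a_n)$ exists in $E$; an increasing sequence $(a_n)$ is $\varphi$-convergent if $\bigvee_n a_n$ exists in $V$ and $\bigvee_n\varphi(a_n)$ exists in $E$. The system is $\Pi$-complete if for every $\varphi$-convergent decreasing $(a_n)$ in $L$, $\bigwedge_n a_n\in L$ and $\varphi(\bigwedge_n a_n)=\bigwedge_n\varphi(a_n)$; $\Sigma$-complete dually with increasing sequences and suprema; complete if both. $\Pi L:=\{\bigwedge_n a_n:(a_n)\ \varphi\text{-convergent decreasing in }L\}$, and $\varphi$ is $\Pi$-extendible if there is a valuation $\Pi\varphi:\Pi L\to E$ with $\Pi\varphi(\bigwedge_n a_n)=\bigwedge_n\varphi(a_n)$ for all such sequences; $\Sigma L$, $\Sigma$-extendible and $\Sigma\varphi$ are defined dually. The hierarchy is defined by transfinite recursion: $\varphi$ is $\Pi_0$- and $\Sigma_0$-extendible with $\Pi_0\varphi=\Sigma_0\varphi=\varphi$ (on $\Pi_0L=\Sigma_0L=L$); $\varphi$ is $\Pi_{\alpha+1}$-extendible iff $\varphi$ is $\Sigma_\alpha$-extendible and $\Sigma_\alpha\varphi$ is $\Pi$-extendible, and then $\Pi_{\alpha+1}L=\Pi(\Sigma_\alpha L)$, $\Pi_{\alpha+1}\varphi=\Pi(\Sigma_\alpha\varphi)$; $\varphi$ is $\Sigma_{\alpha+1}$-extendible iff $\varphi$ is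 $\Pi_\alpha$-extendible and $\Pi_\alpha\varphi$ is $\Sigma$-extendible, and then $\Sigma_{\alpha+1}L=\Sigma(\Pi_\alpha L)$, $\Sigma_{\alpha+1}\varphi=\Sigma(\Pi_\alpha\varphi)$; for a limit ordinal $\lambda$, $\varphi$ is $\Pi_\lambda$-extendible iff it is $\Pi_\alpha$-extendible for all $\alpha<\lambda$, and then $\Pi_\lambda L=\bigcup_{\alpha<\lambda}\Pi_\alpha L$ and $\Pi_\lambda\varphi(c)=\Pi_\beta\varphi(c)$ for $c\in\Pi_\beta L$, $\beta<\lambda$; similarly for $\Sigma_\lambda$. *)

(* Defs.v *)
From HB Require Import structures.
From mathcomp Require Import all_boot all_order all_algebra.
Set Implicit Arguments. Unset Strict Implicit. Unset Printing Implicit Defensive.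
Import Order.TTheory GRing.Theory Num.Theory.

(* Subsets of a type are predicates [T -> Prop]; a partial map [C -> E] on a
   subset [C] of [V] is represented by a total map [V -> E] of which only the
   values on [C] matter. *)

Section Orders.
Context {disp : Order.disp_t} {T : porderType disp}.
Local Open Scope order_scope.

Definition is_inf (a : nat -> T) (x : T) : Prop :=
  (forall n, x <= a n) /\ (forall y, (forall n, y <= a n) -> y <= x).
Definition is_sup (a : nat -> T) (x : T) : Prop :=
  (forall n, a n <= x) /\ (forall y, (forall n, a n <= y) -> x <= y).
Definition has_inf (a : nat -> T) : Prop := exists x, is_inf a x.
Definition has_sup (a : nat -> T) : Prop := exists x, is_sup a x.
Definition decreasing (a : nat -> T) : Prop := forall n, a n.+1 <= a n.
Definition increasing (a : nat -> T) : Prop := forall n, a n <= a n.+1.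
End Orders.

Section Lattices.
Context {disp : Order.disp_t} {V : latticeType disp}.
Local Open Scope order_scope.

Definition sigma_distributive : Prop :=
  (forall (a : V) (b : nat -> V) (x : V), is_inf b x ->
      is_inf (fun n => a `|` b n) (a `|` x)) /\
  (forall (a : V) (b : nat -> V) (x : V), is_sup b x ->
      is_sup (fun n => a `&` b n) (a `&` x)).

Definition sublattice (L : V -> Prop) : Prop :=
  forall a b, L a -> L b -> L (a `&` b) /\ L (a `|` b).
End Lattices.

Section Groups.
Context {E : porderZmodType}.
Local Open Scope ring_scope.

Definition po_group : Prop := forall x y z : E, x <= y -> x + z <= y + z.

Definition R_complete : Prop :=
  (forall x y : nat -> E, decreasing x -> decreasing y ->
      has_inf (fun n => x n + y n) -> has_inf x /\ has_inf y) /\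
  (forall x y : nat -> E, increasing x -> increasing y ->
      has_sup (fun n => x n + y n) -> has_sup x /\ has_sup y).
End Groups.

Section Valuations.
Context {disp : Order.disp_t} {V : latticeType disp} {E : porderZmodType}.

Definition valuation (L : V -> Prop) (phi : V -> E) : Prop :=
  (forall a b, L a -> L b -> (a <= b)%O -> (phi a <= phi b)%R) /\
  (forall a b, L a -> L b ->
     (phi (a `&` b)%O + phi (a `|` b)%O = phi a + phi b)%R).

Definition extends (L : V -> Prop) (phi : V -> E) (C : V -> Prop) (psi : V -> E)
  : Prop := (forall a, L a -> C a) /\ (forall a, L a -> psi a = phi a).

Definition conv_dec (L : V -> Prop) (phi : V -> E) (a : nat -> V) : Prop :=
  (forall n, L (a n)) /\ decreasing a /\ has_inf a /\ has_inf (fun n => phi (a n)).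
Definition conv_inc (L : V -> Prop) (phi : V -> E) (a : nat -> V) : Prop :=
  (forall n, L (a n)) /\ increasing a /\ has_sup a /\ has_sup (fun n => phi (a n)).

Definition Pi_complete (L : V -> Prop) (phi : V -> E) : Prop :=
  forall a x e, conv_dec L phi a -> is_inf a x -> is_inf (fun n => phi (a n)) e ->
    L x /\ phi x = e.
Definition Sigma_complete (L : V -> Prop) (phi : V -> E) : Prop :=
  forall a x e, conv_inc L phi a -> is_sup a x -> is_sup (fun n => phi (a n)) e ->
    L x /\ phi x = e.
Definition complete (L : V -> Prop) (phi : V -> E) : Prop :=
  Pi_complete L phi /\ Sigma_complete L phi.

Definition PiL (L : V -> Prop) (phi : V -> E) : V -> Prop :=
  fun x => exists a, conv_dec L phi a /\ is_inf a x.
Definition SigmaL (L : V -> Prop) (phi : V -> E) : V -> Prop :=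
  fun x => exists a, conv_inc L phi a /\ is_sup a x.

(* [PiExt L phi D f] : phi is Pi-extendible, with Pi L = D and
   Pi phi = f (on D). *)
Definition PiExt (L : V -> Prop) (phi : V -> E) (D : V -> Prop) (f : V -> E)
  : Prop :=
  (forall x, D x <-> PiL L phi x) /\ sublattice D /\ valuation D f /\
  (forall a x e, conv_dec L phi a -> is_inf a x ->
     is_inf (fun n => phi (a n)) e -> f x = e).
Definition SigmaExt (L : V -> Prop) (phi : V -> E) (D : V -> Prop) (f : V -> E)
  : Prop :=
  (forall x, D x <-> SigmaL L phi x) /\ sublattice D /\ valuation D f /\
  (forall a x e, conv_inc L phi a -> is_sup a x ->
     is_sup (fun n => phi (a n)) e -> f x = e).

Definition Ext (b : bool) := if b then PiExt else SigmaExt.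

(* Ordinals are represented as elements of a well-ordered type (W, lt). *)
Definition well_order {W : Type} (lt : W -> W -> Prop) : Prop :=
  well_founded lt /\ (forall x y z, lt x y -> lt y z -> lt x z) /\
  (forall x y, lt x y \/ x = y \/ lt y x).

Definition is_zero {W : Type} (lt : W -> W -> Prop) (al : W) : Prop :=
  forall be, ~ lt be al.
Definition is_succ_of {W : Type} (lt : W -> W -> Prop) (al be : W) : Prop :=
  lt be al /\ forall ga, ~ (lt be ga /\ lt ga al).
Definition is_limit {W : Type} (lt : W -> W -> Prop) (al : W) : Prop :=
  ~ is_zero lt al /\ forall be, ~ is_succ_of lt al be.

(* [Hier lt L phi b al D f] : phi is Pi_al-extendible (b = true) resp.
   Sigma_al-extendible (b = false), with Pi_al L = D (resp. Sigma_al L = D)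
   and Pi_al phi = f (resp. Sigma_al phi = f) on D. *)
Inductive Hier {W : Type} (lt : W -> W -> Prop) (L : V -> Prop) (phi : V -> E)
  : bool -> W -> (V -> Prop) -> (V -> E) -> Prop :=
| Hier_zero : forall b al, is_zero lt al -> Hier lt L phi b al L phi
| Hier_succ : forall b al be D f D' f',
    is_succ_of lt al be -> Hier lt L phi (~~ b) be D f ->
    Ext b D f D' f' -> Hier lt L phi b al D' f'
| Hier_limit : forall b al (Dfam : W -> V -> Prop) (ffam : W -> V -> E)
      (D : V -> Prop) (f : V -> E),
    is_limit lt al ->
    (forall be, lt be al -> Hier lt L phi b be (Dfam be) (ffam be)) ->
    (forall x, D x <-> exists2 be, lt be al & Dfam be x) ->
    (forall be x, lt be al -> Dfam be x -> f x = ffam be x) ->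
    Hier lt L phi b al D f.

End Valuations.

(* Main.v *)
Require Import Defs.
From HB Require Import structures.
From mathcomp Require Import all_boot all_order all_algebra.
From mathcomp Require boolp wochoice.
From Stdlib Require Import Classical.
Import Order.LTheory GRing.Theory.

Section Mono.
Context {disp : Order.disp_t} {T : porderType disp}.
End Mono.
Lemma letr {disp : Order.disp_t} {T : preorderType disp} {x y z : T} : (x <= y)%O -> (y <= z)%O -> (x <= z)%O.
Proof. exact: le_trans. Qed.
Section Mono2.
Context {disp : Order.disp_t} {T : porderType disp}.
Lemma dec_le {a : nat -> T} : decreasing a -> forall m n, (m <= n)%N -> (a n <= a m)%O.
Proof.
move=> ha m; elim=> [|n IH]; first by rewrite leqn0 => /eqP ->.
rewrite leq_eqVlt => /orP[/eqP -> //|]; rewrite ltnS => /IH h.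
exact: letr (ha n) h.
Qed.
Lemma inc_le {a : nat -> T} : increasing a -> forall m n, (m <= n)%N -> (a m <= a n)%O.
Proof.
move=> ha m; elim=> [|n IH]; first by rewrite leqn0 => /eqP ->.
rewrite leq_eqVlt => /orP[/eqP -> //|]; rewrite ltnS => /IH h.
exact: letr h (ha n).
Qed.
Lemma is_inf_const (x : T) : is_inf (fun _ => x) x.
Proof. by split=> [n|y /(_ 0%N)]. Qed.
Lemma is_sup_const (x : T) : is_sup (fun _ => x) x.
Proof. by split=> [n|y /(_ 0%N)]. Qed.
End Mono2.

Section Group.
Context {E : porderZmodType}.
Hypothesis PG : po_group (E := E).
Local Open Scope ring_scope.
Lemma le_add2 (a b c d : E) : a <= b -> c <= d -> a + c <= b + d.
Proof.
move=> h1 h2; apply: letr (PG _ _ c h1) _.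
rewrite (addrC b c) (addrC b d); exact: PG.
Qed.
Lemma le_subr (a b c : E) : a <= b + c -> a - c <= b.
Proof. by move=> h; have := PG _ _ (- c) h; rewrite addrK. Qed.
Lemma le_subl (a b c : E) : a - c <= b -> a <= b + c.
Proof. by move=> h; have := PG _ _ c h; rewrite subrK. Qed.

Lemma le_addr (a b c : E) : a + c <= b -> a <= b - c.
Proof. by move=> h; have := PG _ _ (- c) h; rewrite addrK. Qed.
Lemma le_addl (a b c : E) : a <= b - c -> a + c <= b.
Proof. by move=> h; have := PG _ _ c h; rewrite subrK. Qed.

Lemma inf_add (x y : nat -> E) ex ey : decreasing x -> decreasing y ->
  is_inf x ex -> is_inf y ey -> is_inf (fun n => x n + y n) (ex + ey).
Proof.
move=> dx dy [lx gx] [ly gy]; split=> [n|z hz]; first exact: le_add2.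
have h1 m : z - x m <= ey.
  apply: gy => n; pose k := maxn m n.
  have hh := dec_le dy _ _ (leq_maxr m n); apply: letr _ hh.
  apply: le_subr; apply: letr (hz k) _; rewrite [y k + _]addrC.
  exact: le_add2 (dec_le dx _ _ (leq_maxl m n)) _.
have h2 : z - ey <= ex.
  apply: gx => m; apply: le_subr; rewrite addrC; apply: le_subl; exact: h1.
by apply: le_subl.
Qed.

Lemma sup_add (x y : nat -> E) ex ey : increasing x -> increasing y ->
  is_sup x ex -> is_sup y ey -> is_sup (fun n => x n + y n) (ex + ey).
Proof.
move=> dx dy [lx gx] [ly gy]; split=> [n|z hz]; first exact: le_add2.
have h1 m : ey <= z - x m.
  apply: gy => n; pose k := maxn m n.
  apply: letr (inc_le dy _ _ (leq_maxr m n)) _.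
  apply: le_addr; apply: letr _ (hz k); rewrite addrC.
  exact: le_add2 (inc_le dx _ _ (leq_maxl m n)) _.
have h2 : ex <= z - ey.
  apply: gx => m; apply: le_addr; rewrite addrC; apply: le_addl; exact: h1.
by apply: le_addl.
Qed.
End Group.

Section Lat.
Context {disp : Order.disp_t} {V : latticeType disp}.
Local Open Scope order_scope.
Hypothesis SD : sigma_distributive (V := V).

Lemma inf_meet (a b : nat -> V) x y : is_inf a x -> is_inf b y ->
  is_inf (fun n => a n `&` b n) (x `&` y).
Proof.
move=> [la ga] [lb gb]; split=> [n|z hz]; first exact: leI2.
rewrite lexI; apply/andP; split; [apply: ga|apply: gb] => n;
  by move: (hz n); rewrite lexI => /andP[].
Qed.

Lemma sup_join (a b : nat -> V) x y : is_sup a x -> is_sup b y ->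
  is_sup (fun n => a n `|` b n) (x `|` y).
Proof.
move=> [la ga] [lb gb]; split=> [n|z hz]; first exact: leU2.
rewrite leUx; apply/andP; split; [apply: ga|apply: gb] => n;
  by move: (hz n); rewrite leUx => /andP[].
Qed.

Lemma inf_join (a b : nat -> V) x y : decreasing a -> decreasing b ->
  is_inf a x -> is_inf b y -> is_inf (fun n => a n `|` b n) (x `|` y).
Proof.
move=> da db ha hb; have [la ga] := ha; have [lb gb] := hb.
split=> [n|z hz]; first exact: leU2.
have h1 n m : z <= a n `|` b m.
  apply: letr (hz (maxn n m)) _.
  exact: leU2 (dec_le da _ _ (leq_maxl n m)) (dec_le db _ _ (leq_maxr n m)).
have h2 n : z <= a n `|` y by apply: (SD.1 (a n) b y hb).2 => m; exact: h1.
rewrite joinC; apply: (SD.1 y a x ha).2 => n; rewrite joinC; exact: h2.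
Qed.

Lemma sup_meet (a b : nat -> V) x y : increasing a -> increasing b ->
  is_sup a x -> is_sup b y -> is_sup (fun n => a n `&` b n) (x `&` y).
Proof.
move=> da db ha hb; have [la ga] := ha; have [lb gb] := hb.
split=> [n|z hz]; first exact: leI2.
have h1 n m : a n `&` b m <= z.
  apply: letr _ (hz (maxn n m)).
  exact: leI2 (inc_le da _ _ (leq_maxl n m)) (inc_le db _ _ (leq_maxr n m)).
have h2 n : a n `&` y <= z by apply: (SD.2 (a n) b y hb).2 => m; exact: h1.
rewrite meetC; apply: (SD.2 y a x ha).2 => n; rewrite meetC; exact: h2.
Qed.
End Lat.

Section OpSec.
Context {disp : Order.disp_t} {V : latticeType disp} {E : porderZmodType}.
Variables (C : V -> Prop) (psi : V -> E).
Hypothesis SD : sigma_distributive (V := V).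
Hypothesis PG : po_group (E := E).
Hypothesis RC : R_complete (E := E).
Hypothesis SC : sublattice C.
Hypothesis VC : valuation C psi.
Hypothesis CC : complete C psi.

Definition Op (b : bool) (S : V -> Prop) : V -> Prop :=
  if b then PiL S psi else SigmaL S psi.

Lemma Op_mono b (S S' : V -> Prop) : (forall x, S x -> S' x) ->
  forall x, Op b S x -> Op b S' x.
Proof.
by case: b => h x [a [[Sa [da [hi hv]]] ix]]; exists a; split=> //; split=> // n; apply: h.
Qed.

Lemma Op_incl b (S : V -> Prop) x : S x -> Op b S x.
Proof.
move=> Sx; case: b; exists (fun _ => x); (split; last first);
  [exact: is_inf_const| |exact: is_sup_const|];
  (split; [by []|split; [by move=> n /= |split]]);
  by [exists x; exact: is_inf_const | exists (psi x); exact: is_inf_const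
     | exists x; exact: is_sup_const | exists (psi x); exact: is_sup_const].
Qed.

Lemma Op_C b (S : V -> Prop) : (forall x, S x -> C x) -> forall x, Op b S x -> C x.
Proof.
move=> hS x; case: b => [[a [[Sa [da [hi [e he]]]] ix]]|[a [[Sa [da [hi [e he]]]] ix]]].
  by apply: (CC.1 a x e _ ix he).1; split=> [n|]; [apply: hS|split=> //; split=> //; exists e].
by apply: (CC.2 a x e _ ix he).1; split=> [n|]; [apply: hS|split=> //; split=> //; exists e].
Qed.

Lemma seq_eq {S : V -> Prop} {g : V -> E} {a : nat -> V} :
  (forall x, S x -> g x = psi x) -> (forall n, S (a n)) ->
  (fun n => g (a n)) = (fun n => psi (a n)).
Proof. by move=> hg Sa; apply: boolp.funext => n; apply: hg. Qed.

Lemma Pi_val (S : V -> Prop) (g : V -> E) : (forall x, S x -> C x) ->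
  (forall x, S x -> g x = psi x) ->
  forall a x e, conv_dec S g a -> is_inf a x ->
     is_inf (fun n => g (a n)) e -> psi x = e.
Proof.
move=> hS hg a x e [Sa [da [hi _]]] ix; rewrite (seq_eq hg Sa) => he.
by apply: (CC.1 a x e _ ix he).2; split=> [n|]; [apply: hS|split=> //; split=> //; exists e].
Qed.

Lemma Sigma_val (S : V -> Prop) (g : V -> E) : (forall x, S x -> C x) ->
  (forall x, S x -> g x = psi x) ->
  forall a x e, conv_inc S g a -> is_sup a x ->
     is_sup (fun n => g (a n)) e -> psi x = e.
Proof.
move=> hS hg a x e [Sa [da [hi _]]] ix; rewrite (seq_eq hg Sa) => he.
by apply: (CC.2 a x e _ ix he).2; split=> [n|]; [apply: hS|split=> //; split=> //; exists e].
Qed.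

Lemma Pi_g (S : V -> Prop) (g : V -> E) : (forall x, S x -> g x = psi x) ->
  forall x, PiL S g x <-> Op true S x.
Proof.
move=> hg x; split=> [][a [[Sa [da [hi hv]]] ix]]; exists a; do !split=> //;
  move: hv; by rewrite (seq_eq hg Sa).
Qed.

Lemma Sigma_g (S : V -> Prop) (g : V -> E) : (forall x, S x -> g x = psi x) ->
  forall x, SigmaL S g x <-> Op false S x.
Proof.
move=> hg x; split=> [][a [[Sa [da [hi hv]]] ix]]; exists a; do !split=> //;
  move: hv; by rewrite (seq_eq hg Sa).
Qed.

Lemma val_sub (S : V -> Prop) : (forall x, S x -> C x) -> valuation S psi.
Proof.
move=> hS; split=> a b Sa Sb; [apply: VC.1|apply: VC.2]; exact: hS.
Qed.

Lemma Op_sub b (S : V -> Prop) : sublattice S -> (forall x, S x -> C x) ->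
  sublattice (Op b S).
Proof.
move=> SS hS x y; case: b.
- move=> [a [[Sa [da [[x' ix'] [ea hea]]]] ix]] [c [[Sc [dc [[y' iy'] [ec hec]]]] iy]].
  pose m n := (a n `&` c n)%O; pose j n := (a n `|` c n)%O.
  have Sm n : S (m n) by apply: (SS _ _ (Sa n) (Sc n)).1.
  have Sj n : S (j n) by apply: (SS _ _ (Sa n) (Sc n)).2.
  have dm : decreasing m by move=> n; apply: leI2.
  have dj : decreasing j by move=> n; apply: leU2.
  have dpa : decreasing (fun n => psi (a n)) by move=> n; apply: VC.1 => //; apply: hS.
  have dpc : decreasing (fun n => psi (c n)) by move=> n; apply: VC.1 => //; apply: hS.
  have dpm : decreasing (fun n => psi (m n)) by move=> n; apply: VC.1 => //; apply: hS.
  have dpj : decreasing (fun n => psi (j n)) by move=> n; apply: VC.1 => //; apply: hS.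
  have hsum : has_inf (fun n => (psi (m n) + psi (j n))%R).
    exists (ea + ec)%R; have -> : (fun n => (psi (m n) + psi (j n))%R) =
        (fun n => (psi (a n) + psi (c n))%R).
      by apply: boolp.funext => n; apply: VC.2; apply: hS.
    exact: inf_add.
  have [hm hj] := RC.1 _ _ dpm dpj hsum.
  split.
  + exists m; split; last exact: inf_meet.
    by do !split=> //; exists (x `&` y)%O; apply: inf_meet.
  + exists j; split; last exact: inf_join.
    by do !split=> //; exists (x `|` y)%O; apply: inf_join.
- move=> [a [[Sa [da [[x' ix'] [ea hea]]]] ix]] [c [[Sc [dc [[y' iy'] [ec hec]]]] iy]].
  pose m n := (a n `&` c n)%O; pose j n := (a n `|` c n)%O.
  have Sm n : S (m n) by apply: (SS _ _ (Sa n) (Sc n)).1.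
  have Sj n : S (j n) by apply: (SS _ _ (Sa n) (Sc n)).2.
  have dm : increasing m by move=> n; apply: leI2.
  have dj : increasing j by move=> n; apply: leU2.
  have dpa : increasing (fun n => psi (a n)) by move=> n; apply: VC.1 => //; apply: hS.
  have dpc : increasing (fun n => psi (c n)) by move=> n; apply: VC.1 => //; apply: hS.
  have dpm : increasing (fun n => psi (m n)) by move=> n; apply: VC.1 => //; apply: hS.
  have dpj : increasing (fun n => psi (j n)) by move=> n; apply: VC.1 => //; apply: hS.
  have hsum : has_sup (fun n => (psi (m n) + psi (j n))%R).
    exists (ea + ec)%R; have -> : (fun n => (psi (m n) + psi (j n))%R) =
        (fun n => (psi (a n) + psi (c n))%R).
      by apply: boolp.funext => n; apply: VC.2; apply: hS.
    exact: sup_add.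
  have [hm hj] := RC.2 _ _ dpm dpj hsum.
  split.
  + exists m; split; last exact: sup_meet.
    by do !split=> //; exists (x `&` y)%O; apply: sup_meet.
  + exists j; split; last exact: sup_join.
    by do !split=> //; exists (x `|` y)%O; apply: sup_join.
Qed.

Variables (W : Type) (lt : W -> W -> Prop) (L : V -> Prop) (phi : V -> E).
Hypothesis WO : Defs.well_order lt.
Hypothesis SL : sublattice L.
Hypothesis LC : forall x, L x -> C x.
Hypothesis Lphi : forall x, L x -> psi x = phi x.

Definition Gstep (al : W) (rec : forall be, lt be al -> bool -> V -> Prop)
  (b : bool) (x : V) : Prop :=
  L x \/ exists be (h : lt be al), Op b (rec be h (~~ b)) x.

Definition G0 := Fix WO.1 (fun _ => bool -> V -> Prop) Gstep.
Definition G b al := G0 al b.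

Lemma G_eq b al x : G b al x <-> L x \/ exists2 be, lt be al & Op b (G (~~ b) be) x.
Proof.
rewrite /G /G0 Fix_eq; last first.
  move=> a f g hfg; have -> // : f = g.
  apply: boolp.functional_extensionality_dep => be.
  apply: boolp.functional_extensionality_dep => h; exact: hfg.
rewrite /Gstep; split=> [][Lx|[be]]; try by left.
- by move=> [h hx]; right; exists be.
- by move=> h hx; right; exists be, h.
Qed.

Lemma G_L b al x : L x -> G b al x.
Proof. by move=> Lx; apply/G_eq; left. Qed.

Lemma G_Op b be al x : lt be al -> Op b (G (~~ b) be) x -> G b al x.
Proof. by move=> h hx; apply/G_eq; right; exists be. Qed.

Lemma G_mono b ga al x : lt ga al -> G b ga x -> G b al x.
Proof.
move=> h /G_eq [Lx|[be hb hx]]; first exact: G_L.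
apply: G_Op hx; exact: WO.2.1 hb h.
Qed.

Lemma G_C al : forall b x, G b al x -> C x.
Proof.
elim/(well_founded_ind WO.1): al => al IH b x /G_eq [Lx|[be hb hx]]; first exact: LC.
exact: Op_C (IH be hb (~~ b)) x hx.
Qed.

Lemma G_sub al : forall b, sublattice (G b al).
Proof.
elim/(well_founded_ind WO.1): al => al IH b x y hx hy.
have Lin be z : L z -> Op b (G (~~ b) be) z by move=> Lz; apply: Op_incl; apply: G_L.
have Kmono b1 b2 z : lt b1 b2 -> Op b (G (~~ b) b1) z -> Op b (G (~~ b) b2) z.
  by move=> h; apply: Op_mono => w; apply: G_mono.
have [[Lx Ly]|[be [hbe [Kx Ky]]]] : (L x /\ L y) \/
   exists be, lt be al /\ Op b (G (~~ b) be) x /\ Op b (G (~~ b) be) y.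
  move/G_eq: hx => [Lx|[b1 h1 x1]]; move/G_eq: hy => [Ly|[b2 h2 y2]].
  - by left.
  - by right; exists b2; split=> //; split=> //; apply: Lin.
  - by right; exists b1; split=> //; split=> //; apply: Lin.
  - right; have [h12|[e12|h21]] := WO.2.2 b1 b2.
    + by exists b2; split=> //; split=> //; apply: Kmono h12 x1.
    + by subst b2; exists b1.
    + by exists b1; split=> //; split=> //; apply: Kmono h21 y2.
  - have [LI LU] := SL x y Lx Ly.
    by split; apply: G_L.
  - have hs := @Op_sub b _ (IH be hbe (~~ b)) (@G_C be (~~ b)).
    have [I U] := hs x y Kx Ky.
    by split; apply: G_Op I || apply: G_Op U.
Qed.

Lemma G_hier al : forall b, exists f : V -> E,
  Hier lt L phi b al (G b al) f /\ (forall x, G b al x -> f x = psi x).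
Proof.
elim/(well_founded_ind WO.1): al => al IH b.
have [hz|hnz] := classic (is_zero lt al).
  have -> : G b al = L.
    apply: boolp.funext => x; apply: boolp.propext; split; last exact: G_L.
    by move/G_eq => [//|[be hb _]]; case: (hz be).
  by exists phi; split; [exact: Hier_zero | move=> x Lx; rewrite Lphi].
have [[be hs]|hns] := classic (exists be, is_succ_of lt al be).
  have [f0 [H0 hf0]] := IH be hs.1 (~~ b).
  have eqG : G b al = Op b (G (~~ b) be).
    apply: boolp.funext => x; apply: boolp.propext; split; last exact: G_Op hs.1.
    move/G_eq => [Lx|[ga hga hx]]; first by apply: Op_incl; apply: G_L.
    have [hgb|[egb|hbg]] := WO.2.2 ga be.
    - by apply: Op_mono hx => w; apply: G_mono.
    - by subst ga.
    - by case: (hs.2 ga).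
  exists psi; split=> //; apply: (Hier_succ hs H0); rewrite eqG.
  case: b eqG H0 hf0 => /= eqG H0 hf0.
  - split; first by move=> x; exact: iff_sym (@Pi_g _ _ hf0 x).
    split; first by apply: (@Op_sub true); [exact: G_sub | exact: G_C].
    split; first by apply: val_sub; apply: (@Op_C true); exact: G_C.
    by apply: Pi_val; [exact: G_C | exact: hf0].
  - split; first by move=> x; exact: iff_sym (@Sigma_g _ _ hf0 x).
    split; first by apply: (@Op_sub false); [exact: G_sub | exact: G_C].
    split; first by apply: val_sub; apply: (@Op_C false); exact: G_C.
    by apply: Sigma_val; [exact: G_C | exact: hf0].
have hl : is_limit lt al by split=> // be hbe; apply: hns; exists be.
have ch : forall be, exists f : V -> E, lt be al ->
    Hier lt L phi b be (G b be) f /\ (forall x, G b be x -> f x = psi x).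
  move=> be; have [hbe|nbe] := classic (lt be al).
    by have [f hf] := IH be hbe b; exists f.
  by exists psi.
pose ffam be := proj1_sig (boolp.cid (ch be)).
exists psi; split=> //.
apply: (@Hier_limit _ _ _ _ _ _ _ b al (fun be => G b be) ffam) => //.
- by move=> be hbe; exact: (proj2_sig (boolp.cid (ch be)) hbe).1.
- move=> x; split; last by move=> [be hbe hx]; apply: G_mono hx.
  move/G_eq => [Lx|[be hbe hx]].
    have [be hbe] : exists be, lt be al.
      by apply: NNPP => hne; apply: hnz => be hbe; apply: hne; exists be.
    by exists be => //; apply: G_L.
  have [ga [h1 h2]] : exists ga, lt be ga /\ lt ga al.
    apply: NNPP => hne; apply: hns; exists be; split=> // ga [h1 h2].
    by apply: hne; exists ga.
  by exists ga => //; apply: G_Op hx.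
- by move=> be x hbe hx; symmetry; apply: (proj2_sig (boolp.cid (ch be)) hbe).2.
Qed.

Lemma G_complete al de be : lt al de -> lt de be -> G true be = G true al ->
  complete (G true al) psi.
Proof.
move=> h1 h2 heq.
have kS x : Op false (G true al) x -> G true al x.
  move=> hx; rewrite -heq; apply: (@G_Op true de be x h2).
  by apply: (@Op_incl true); apply: (@G_Op false al de x h1 hx).
have kP x : Op true (G true al) x -> G true al x.
  move=> hx; rewrite -heq; apply: (@G_Op true de be x h2).
  move: hx; apply: (@Op_mono true) => y hy; apply: (@G_Op false al de y h1).
  exact: (@Op_incl false).
split.
- move=> a x e hc ix he; split.
    by apply: kP; exists a.
  by apply: Pi_val hc ix he; [exact: G_C | by []].
- move=> a x e hc ix he; split.
    by apply: kS; exists a.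
  by apply: Sigma_val hc ix he; [exact: G_C | by []].
Qed.

Lemma G_min (C' : V -> Prop) (psi' : V -> E) :
  extends L phi C' psi' -> complete C' psi' ->
  forall al b x, G b al x -> C' x /\ psi' x = psi x.
Proof.
move=> [e1 e2] [cP cS] al.
elim/(well_founded_ind WO.1): al => al IH b x /G_eq [Lx|[be hbe hx]].
  by split; [exact: e1 | rewrite e2 // Lphi].
have hS : forall y, G (~~ b) be y -> psi' y = psi y by move=> y /(IH be hbe) [].
have hC : forall y, G (~~ b) be y -> C' y by move=> y /(IH be hbe) [].
case: b hx hS hC => hx hS hC.
- move: hx => [a [hc ix]]; have [Sa [da [hi [e he]]]] := hc.
  have -> : psi x = e by apply: (@Pi_val _ _ (@G_C be (~~ true)) (fun _ _ => erefl) a x e hc ix he).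
  have he' : is_inf (fun n => psi' (a n)) e by rewrite (seq_eq hS Sa).
  have hc' : conv_dec C' psi' a.
    by split; [move=> n; exact: hC (Sa n) | split=> //; split=> //; exists e].
  exact: cP a x e hc' ix he'.
- move: hx => [a [hc ix]]; have [Sa [da [hi [e he]]]] := hc.
  have -> : psi x = e by apply: (@Sigma_val _ _ (@G_C be (~~ false)) (fun _ _ => erefl) a x e hc ix he).
  have he' : is_sup (fun n => psi' (a n)) e by rewrite (seq_eq hS Sa).
  have hc' : conv_inc C' psi' a.
    by split; [move=> n; exact: hC (Sa n) | split=> //; split=> //; exists e].
  exact: cS a x e hc' ix he'.
Qed.

Lemma triple (NI : forall j : W -> ((V -> Prop) * Prop)%type,
    ~ (forall u v, j u = j v -> u = v)) :
  exists al de be, lt al de /\ lt de be /\ G true be = G true al.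
Proof.
apply: NNPP => hno.
pose j (w : W) := (G true w, exists b, lt b w /\ G true b = G true w).
apply: (NI j) => u v hj.
have key : forall u v, lt u v -> j u = j v -> False.
  move=> u' v' huv [hG hfl].
  have : exists b, lt b v' /\ G true b = G true v' by exists u'.
  rewrite -hfl => -[b [hbu hb]].
  by apply: hno; exists b, u', v'; do !split=> //; rewrite -hG hb.
have [huv|[//|hvu]] := WO.2.2 u v; first by case: (key u v huv hj).
by case: (key v u hvu (esym hj)).
Qed.

Lemma final (tr : exists al de be, lt al de /\ lt de be /\ G true be = G true al) :
  exists (Lbar : V -> Prop) (phibar : V -> E),
    sublattice Lbar /\ valuation Lbar phibar /\ extends L phi Lbar phibar /\
    complete Lbar phibar /\
    (forall (C' : V -> Prop) (psi' : V -> E),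
       sublattice C' -> valuation C' psi' -> extends L phi C' psi' ->
       complete C' psi' -> extends Lbar phibar C' psi') /\
    (exists (W : Type) (lt : W -> W -> Prop) (xi : W) (D : V -> Prop) (f : V -> E),
       Defs.well_order lt /\ Hier lt L phi true xi D f /\
       (forall x, Lbar x <-> D x) /\ (forall x, Lbar x -> phibar x = f x)).
Proof.
have [al [de [be [h1 [h2 heq]]]]] := tr.
exists (G true al), psi; split; first exact: G_sub.
split; first by apply: val_sub; exact: G_C.
split; first by split=> x Lx; [exact: G_L | exact: Lphi].
split; first exact: G_complete h1 h2 heq.
split.
  move=> C' psi' _ _ hext hcomp; split=> x hx.
    by have [] := @G_min C' psi' hext hcomp _ _ _ hx.
  by have [] := @G_min C' psi' hext hcomp _ _ _ hx.
have [f [hH hf]] := G_hier al true.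
exists W, lt, al, (G true al), f; split=> //; split=> //; split=> // x hx.
by rewrite hf.
Qed.
End OpSec.

Module WOM.
Import boolp.
Lemma exists_wo (T : Type) : exists lt : T -> T -> Prop, Defs.well_order lt.
Proof.
have [R hR] := wochoice.well_ordering_principle (boolp.classicType T).
have wc : wochoice.wo_chain R predT by move=> A _; exact: hR A.
have tot := wochoice.wo_chainW wc.
have refl := wochoice.wo_chain_reflexive wc.
have anti := wochoice.wo_chain_antisymmetric wc.
have antis (x y : (boolp.classicType T)) : R x y -> R y x -> x = y.
  by move=> h1 h2; apply: anti => //; rewrite h1 h2.
have trans (x y z : (boolp.classicType T)) : R x y -> R y z -> R x z.
  move=> hxy hyz.
  have ne : wochoice.nonempty [mem [:: x; y; z] : seq (boolp.classicType T)] by exists x; rewrite inE eqxx.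
  have [m [[mA lbm] _]] := hR _ ne.
  move: mA lbm; rewrite !inE => /or3P[/eqP ->|/eqP ->|/eqP ->] lbm.
  - by apply: lbm; rewrite !inE eqxx !orbT.
  - have hyx : R y x by apply: lbm; rewrite !inE eqxx.
    by rewrite (antis _ _ hxy hyx).
  - have hzy : R z y by apply: lbm; rewrite !inE eqxx !orbT.
    by rewrite -(antis _ _ hyz hzy).
exists (fun x y : (boolp.classicType T) => R x y /\ x <> y); split; [|split].
- move=> x; apply: NNPP => hx.
  pose A := [pred y : (boolp.classicType T) | boolp.asbool (~ Acc (fun x y : (boolp.classicType T) => R x y /\ x <> y) y)].
  have ne : wochoice.nonempty A by exists x; rewrite inE; apply/boolp.asboolP.
  have [z [[zA lbz] _]] := hR _ ne.
  move: zA; rewrite inE => /boolp.asboolP; apply; constructor => y [Ryz ynz].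
  apply: NNPP => hy; apply: ynz; apply: antis => //; apply: lbz.
  by rewrite inE; apply/boolp.asboolP.
- move=> x y z [hxy nxy] [hyz nyz]; split; first exact: trans hxy hyz.
  move=> exz; subst z; apply: nxy; exact: antis.
- move=> x y; have [->|nxy] := Classical_Prop.classic (x = y); first by right; left.
  have := tot x y isT isT; case/orP => h; [left|right; right]; split=> //.
  by move=> e; apply: nxy.
Qed.

End WOM.

Lemma cantor (X : Type) (j : (X -> Prop) -> X) : ~ (forall u v, j u = j v -> u = v).
Proof.
move=> inj; pose D := fun x => exists u, j u = x /\ ~ u x.
have nD : ~ D (j D) by move=> hD; case: (hD) => u [hu nu]; have e := inj _ _ hu; subst u; exact: nu hD.
by apply: (nD); exists D; split.
Qed.

Theorem proposition5p8 (d : Order.disp_t) (V : latticeType d)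
  (E : porderZmodType) (L : V -> Prop) (phi : V -> E) :
  sigma_distributive (V := V) -> sublattice L ->
  po_group (E := E) -> R_complete (E := E) -> valuation L phi ->
  (exists (C : V -> Prop) (psi : V -> E),
     sublattice C /\ valuation C psi /\ extends L phi C psi /\ complete C psi) ->
  exists (Lbar : V -> Prop) (phibar : V -> E),
    sublattice Lbar /\ valuation Lbar phibar /\ extends L phi Lbar phibar /\
    complete Lbar phibar /\
    (forall (C' : V -> Prop) (psi' : V -> E),
       sublattice C' -> valuation C' psi' -> extends L phi C' psi' ->
       complete C' psi' -> extends Lbar phibar C' psi') /\
    (exists (W : Type) (lt : W -> W -> Prop) (xi : W) (D : V -> Prop) (f : V -> E),
       well_order lt /\ Hier lt L phi true xi D f /\
       (forall x, Lbar x <-> D x) /\ (forall x, Lbar x -> phibar x = f x)).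
Proof.
move=> SD SL PG RC VL [C [psi [SC [VC [[LC ext2] CC]]]]].
have [lt WO] := WOM.exists_wo (((V -> Prop) * Prop)%type -> Prop).
apply: (@final _ _ _ C psi SD PG RC VC CC _ lt L phi WO SL LC ext2).
apply: triple => j; exact: cantor.
Qed.
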